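(* Let $P$ be a finite set of points in the plane, $G$ its $\Theta_4$-graph, and $s,t\in P$ distinct. Let $u$ and $v$ be two consecutive vertices on the path $\mathcal{P}(s,t)$ followed by the routing algorithm described below from $s$ to $t$. Then $L_\infty(u,t)\ge L_\infty(v,t)$, where $L_\infty(a,b)=\max\{|a_x-b_x|,|a_y-b_y|\}$.
   Context: Cones: for a point $v=(v_x,v_y)$, let $C_0^v=\{(x,y):x\ge v_x,\ y\le v_y\}$, $C_1^v=\{x\ge v_x,\ y\ge v_y\}$, $C_2^v=\{x\le v_x,\ y\ge v_y\}$, $C_3^v=\{x\le v_x,\ y\le v_y\}$, with bisector directions $d_0=(1,-1)$, $d_1=(1,1)$, $d_2=(-1,1)$, $d_3=(-1,-1)$. The $\Theta_4$-graph of $P$ has, for each $v\in P$ and each $i$ with $(P\setminus\{v\})\cap C_i^v\neq\emptyset$, a directed edge $(v,w)$ where $w\in(P\setminus\{v\})\cap C_i^v$ minimizes $\langle w-v,d_i\rangle$ (ties broken arbitrarily); $w$ is the neighbour of $v$ in $C_i^v$. The algorithm: Let $\ell$ be the line through $t$ of slope $+1$ or $-1$ that bisects a cone $C_i^t$ containing $s$. For a vertex $v$: if $v\in\ell$, $T(v,\ell)=\{v\}$; otherwise let $H$ be the closed half-plane bounded by $\ell$ containing $v$, $C$ the cone $C_j^v$ whose bisector direction is perpendicular to $\ell$ and points from $v$ towards $\ell$, and $T(v,\ell)=C\cap H$. $v$ is clean if $T(v,\ell)$ contains no point of $P$ other than $v$. A sweeping step from $v$ goes to the neighbour of $v$ in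 $C$; a greedy step from $v$ goes to the neighbour of $v$ in the cone $C_i^v$ containing $t$. Starting from $v=s$, while $v\neq t$, the algorithm takes a sweeping step if $v$ is not clean and a greedy step otherwise. *)

(* Defs.v *)
From mathcomp Require Import all_boot all_order all_algebra.
Set Implicit Arguments. Unset Strict Implicit. Unset Printing Implicit Defensive.
Import Order.TTheory GRing.Theory Num.Theory.
Local Open Scope ring_scope.

Section Theta4.
Variable R : realFieldType.
Notation pt := (R * R)%type.

Definition dot (a b : pt) : R := a.1 * b.1 + a.2 * b.2.
Definition psub (a b : pt) : pt := (a.1 - b.1, a.2 - b.2).

Definition dir (i : 'I_4) : pt :=
  match val i with
  | 0 => (1, -1)
  | 1 => (1, 1)
  | 2 => (-1, 1)
  | _ => (-1, -1)
  end.

Definition in_cone (i : 'I_4) (v w : pt) : bool :=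
  match val i with
  | 0 => (v.1 <= w.1) && (w.2 <= v.2)
  | 1 => (v.1 <= w.1) && (v.2 <= w.2)
  | 2 => (w.1 <= v.1) && (v.2 <= w.2)
  | _ => (w.1 <= v.1) && (w.2 <= v.2)
  end.

(* nb v i is the neighbour of v in C_i^v in the Theta_4-graph of P
   (ties broken arbitrarily, encoded by the choice function nb). *)
Definition theta4_nb (P : seq pt) (nb : pt -> 'I_4 -> pt) : Prop :=
  forall v i, v \in P ->
    (exists w, [/\ w \in P, w != v & in_cone i v w]) ->
    [/\ nb v i \in P, nb v i != v, in_cone i v (nb v i) &
        forall w, w \in P -> w != v -> in_cone i v w ->
          dot (psub (nb v i) v) (dir i) <= dot (psub w v) (dir i)].

(* l is the line through t with direction d_i (bisecting C_i^t);
   nrm i is a normal vector of l. *)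
Definition nrm (i : 'I_4) : pt := (- (dir i).2, (dir i).1).

(* p lies in the closed half-plane bounded by l that contains v *)
Definition in_H (i : 'I_4) (t v p : pt) : bool :=
  0 <= dot (psub p t) (nrm i) * dot (psub v t) (nrm i).

(* C_j^v is the cone whose bisector is perpendicular to l and points from v towards l *)
Definition sweep_cone (i : 'I_4) (t v : pt) (j : 'I_4) : bool :=
  (dot (dir j) (dir i) == 0) && (0 < dot (psub t v) (dir j)).

(* v is clean: T(v,l) = C \cap H contains no point of P other than v.
   If v lies on l there is no sweep cone and T(v,l) = {v}, so v is clean. *)
Definition clean (P : seq pt) (i : 'I_4) (t v : pt) : Prop :=
  forall j w, sweep_cone i t v j -> w \in P -> w != v -> in_cone j v w ->
    ~~ in_H i t v w.

Definition alg_step (P : seq pt) (nb : pt -> 'I_4 -> pt) (i : 'I_4) (t u v : pt)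
  : Prop :=
  u != t /\
  ((~ clean P i t u /\ exists j, sweep_cone i t u j /\ v = nb u j) \/
   (clean P i t u /\ exists k, in_cone k u t /\ v = nb u k)).

Inductive visited (P : seq pt) (nb : pt -> 'I_4 -> pt) (i : 'I_4) (s t : pt)
  : pt -> Prop :=
  | visited_start : visited P nb i s t s
  | visited_step u v : visited P nb i s t u -> alg_step P nb i t u v ->
      visited P nb i s t v.

Definition Linf (a b : pt) : R := Num.max `|a.1 - b.1| `|a.2 - b.2|.

End Theta4.

(* Main.v *)
Require Import Defs.
From mathcomp Require Import all_boot all_order all_algebra.
From mathcomp Require Import lra.
From Stdlib Require Import Classical.
Import Order.TTheory GRing.Theory Num.Theory.
Local Open Scope ring_scope.

Ltac split_ands := repeat match goal with
  | H : is_true (_ && _) |- _ => case/andP: H => ? ? end.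

Lemma Linf_suff (R : realFieldType) (u v t : R * R) :
  (forall M, u.1 - t.1 <= M -> t.1 - u.1 <= M -> u.2 - t.2 <= M -> t.2 - u.2 <= M ->
     [/\ -M <= v.1 - t.1, v.1 - t.1 <= M, -M <= v.2 - t.2 & v.2 - t.2 <= M]) ->
  Linf v t <= Linf u t.
Proof.
move=> H; rewrite /Linf.
have h1 : `|u.1 - t.1| <= Num.max `|u.1 - t.1| `|u.2 - t.2| by rewrite le_max lexx.
have h2 : `|u.2 - t.2| <= Num.max `|u.1 - t.1| `|u.2 - t.2| by rewrite le_max lexx orbT.
move: h1 h2; set M := Num.max `|u.1 - t.1| `|u.2 - t.2|.
move=> /ler_normlP [h1 h1'] /ler_normlP [h2 h2'].
have [] := H M; try lra.
move=> a b c d.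
rewrite ge_max; apply/andP; split; apply/ler_normlP; split; lra.
Qed.

Ltac unf := unfold in_cone, in_H, sweep_cone, dot, psub, nrm, dir in *; simpl in *.

Lemma sweep_uniq (R : realFieldType) (i : 'I_4) (t u : R * R) j j0 :
  sweep_cone i t u j -> sweep_cone i t u j0 -> j = j0.
Proof.
move=> /andP[/eqP a b] /andP[/eqP c d]; move: a b c d.
case: i => [[|[|[|[|i]]]] Hi] //;
case: j => [[|[|[|[|j]]]] Hj] //;
case: j0 => [[|[|[|[|j0]]]] Hj0] //; move=> a b c d; unf;
first [by apply: val_inj | exfalso; lra].
Qed.

Arguments sweep_uniq {R i t u j j0}.

Lemma step_ok (R : realFieldType) (P : seq (R * R)) nb (i : 'I_4) (t u v : R * R) :
  theta4_nb P nb -> u \in P -> t \in P -> alg_step P nb i t u v ->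
  v \in P /\ Linf v t <= Linf u t.
Proof.
move=> Hnb uP tP [ut [[Hnc [j [Hj ->]]] | [Hc [k [Hk ->]]]]].
- have [j0 [w [h1 [h2 [h3 [h4 h5]]]]]] : exists j0 w, [/\ sweep_cone i t u j0,
     w \in P, w != u, in_cone j0 u w & in_H i t u w].
    apply: NNPP => Hn; apply: Hnc => j0 w a b c d; apply/negP => e; apply: Hn.
    by exists j0, w.
  have ej := sweep_uniq Hj h1; subst j0.
  have [vP _ vc vmin] := Hnb u j uP (ex_intro _ w (And3 h2 h3 h4)).
  have hm := vmin w h2 h3 h4.
  split => //.
  have Hw : dot (psub w t) (dir R j) <= 0.
    move: Hj h5; rewrite /sweep_cone => /andP[/eqP a b]; move: a b; clear Hnc h1 h4 vP vc vmin hm.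
    case: i => [[|[|[|[|i]]]] Hi] //;
    case: j => [[|[|[|[|j]]]] Hj] //; move=> a b; unf; nra.
  apply: Linf_suff => M *.
  move: Hj vc hm Hw; rewrite /sweep_cone => /andP[/eqP a b]; move: a b; clear Hnc h1 h4 h5 vmin vP.
  case: i => [[|[|[|[|i]]]] Hi] //;
  case: j => [[|[|[|[|j]]]] Hj] //; move=> a b c d e; unf; split_ands; split; lra.
- have tu : t != u by rewrite eq_sym.
  have [vP _ vc vmin] := Hnb u k uP (ex_intro _ t (And3 tP tu Hk)).
  have hm := vmin t tP tu Hk.
  split => //.
  apply: Linf_suff => M *.
  move: Hk vc hm; clear vP vmin.
  case: k => [[|[|[|[|k]]]] Hk] //; move=> a b c; unf; split_ands; split; lra.
Qed.

Arguments step_ok {R P nb i t u v}.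

Lemma visited_in (R : realFieldType) (P : seq (R * R)) nb (i : 'I_4) (s t u : R * R) :
  theta4_nb P nb -> s \in P -> t \in P -> visited P nb i s t u -> u \in P.
Proof.
move=> Hnb sP tP; elim => // u0 v0 _ IH st.
by have [] := step_ok Hnb IH tP st.
Qed.

Arguments visited_in {R P nb i s t u}.

Theorem lemma1 (R : realFieldType) (P : seq (R * R)) (nb : R * R -> 'I_4 -> R * R)
  (s t : R * R) (i : 'I_4) (u v : R * R) :
  theta4_nb P nb -> s \in P -> t \in P -> s != t -> in_cone i t s ->
  visited P nb i s t u -> alg_step P nb i t u v ->
  Linf v t <= Linf u t.
Proof.
move=> Hnb sP tP _ _ vis st.
by have [] := step_ok Hnb (visited_in Hnb sP tP vis) tP st.
Qed.
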